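(* On every interface element $T$ on which the IFE shape functions are unisolvent, for all $X\in T$, all choices $\overline X_i\in l$, $s=\pm$ ($s'$ opposite), and $j,k=1,2$: $$\sum_{i\in\mathcal I}(A_i-X)^T\otimes\Phi^s_i(X)+\sum_{i\in\mathcal I^{s'}}\big((A_i-\overline X_i)^T\otimes\Phi^s_i(X)\big)(\overline M^s-I_4)=0_{2\times4},$$ $$\sum_{i\in\mathcal I}(A_i-X)^T\otimes\partial_{x_j}\Phi^s_i(X)+\sum_{i\in\mathcal I^{s'}}\big((A_i-\overline X_i)^T\otimes\partial_{x_j}\Phi^s_i(X)\big)(\overline M^s-I_4)=I^j,$$ $$\sum_{i\in\mathcal I}(A_i-X)^T\otimes\partial_{x_jx_k}\Phi^s_i(X)+\sum_{i\in\mathcal I^{s'}}\big((A_i-\overline X_i)^T\otimes\partial_{x_jx_k}\Phi^s_i(X)\big)(\overline M^s-I_4)=0_{2\times4},$$ where $I^1=[I_2,0_{2\times2}]$ and $I^2=[0_{2\times2},I_2]$.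
   Context: Lamé parameters $\lambda^\pm,\mu^\pm>0$; stress $\sigma^s(\mathbf v)=\lambda^s(\nabla\cdot\mathbf v)I+2\mu^s\epsilon(\mathbf v)$. $T$ is a triangle with $\Pi_T=[\mathrm{span}\{1,x,y\}]^2$ and nodes its vertices, or a square with $\Pi_T=[\mathrm{span}\{1,x,y,xy\}]^2$ and nodes its vertices, or a square with $\Pi_T=[\mathrm{span}\{1,x,y,x^2-y^2\}]^2$ and nodes its edge midpoints; $\mathcal I$ the node index set. $\Gamma$ meets $\partial T$ at $D,E$; $l$ is the line through them with unit normal $\bar{\mathbf n}=(\bar n_1,\bar n_2)$; $l$ splits $T$ into $\overline T^\pm$; $\mathcal I^s=\{i:A_i\in T\cap\Omega^s\}$. IFE shape functions $\boldsymbol\phi_{i,T}$ ($1\le i\le2|\mathcal I|$) are the piecewise functions $\boldsymbol\phi^s\in\Pi_T$ on $\overline T^s$, continuous across $l$, with (square cases) equal coefficient vectors of $xy$ (resp. $x^2-y^2$), satisfying $\sigma^+(\boldsymbol\phi^+)(F)\bar{\mathbf n}=\sigma^-(\boldsymbol\phi^-)(F)\bar{\mathbf n}$ at a fixed $F\in l$, with $\boldsymbol\phi_{i,T}(A_j)=(\delta_{ij},0)^T$ ($i\le|\mathcal I|$), $(0,\delta_{i-|\mathcal I|,j})^T$ ($i>|\mathcal I|$); unisolvent means nodal values determine IFE functions uniquely. $\Phi_{i,T}=[\boldsymbol\phi_{i,T},\boldsymbol\phi_{i+|\mathcal I|,T}]$, and $\Phi^s_i$ is the $2\times2$ matrix polynomial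 equal to $\Phi_{i,T}$ on $\overline T^s$. $\overline N^s$ is the $4\times4$ matrix with rows $((\lambda^s+2\mu^s)\bar n_1,\mu^s\bar n_2,\mu^s\bar n_2,\lambda^s\bar n_1)$, $(\lambda^s\bar n_2,\mu^s\bar n_1,\mu^s\bar n_1,(\lambda^s+2\mu^s)\bar n_2)$, $(-\bar n_2,0,\bar n_1,0)$, $(0,-\bar n_2,0,\bar n_1)$; $\overline M^-=(\overline N^+)^{-1}\overline N^-$, $\overline M^+=(\overline N^-)^{-1}\overline N^+$. $\otimes$ is the Kronecker product. *)

(* Defs.v *)
(* the statement is purely algebraic (polynomials of degree <= 2
   in two variables, formal partial derivatives), stated over any realFieldType. *)
From HB Require Import structures.
From mathcomp Require Import all_boot all_order all_algebra.
Set Implicit Arguments. Unset Strict Implicit. Unset Printing Implicit Defensive.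
Import Order.TTheory GRing.Theory Num.Theory.
Local Open Scope ring_scope.

Section IFE.
Variable R : realFieldType.

Definition pt := (R * R)%type.

Record bpoly := BPoly { c0 : R; cx : R; cy : R; cxx : R; cxy : R; cyy : R }.

Definition bev (p : bpoly) (X : pt) : R :=
  c0 p + cx p * X.1 + cy p * X.2 + cxx p * X.1 ^+ 2 + cxy p * X.1 * X.2
  + cyy p * X.2 ^+ 2.

Definition bdx (p : bpoly) : bpoly := BPoly (cx p) (2%:R * cxx p) (cxy p) 0 0 0.
Definition bdy (p : bpoly) : bpoly := BPoly (cy p) (cxy p) (2%:R * cyy p) 0 0 0.
Definition bd (j : 'I_2) (p : bpoly) : bpoly := if val j == 0%N then bdx p else bdy p.

Definition vpoly := (bpoly * bpoly)%type.
Definition vcomp (u : vpoly) (r : 'I_2) : bpoly := if val r == 0%N then u.1 else u.2.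
Definition pcomp (X : pt) (r : 'I_2) : R := if val r == 0%N then X.1 else X.2.
Definition vev (u : vpoly) (X : pt) : pt := (bev u.1 X, bev u.2 X).

(* ETri P1 P2 P3 : triangle, P1 = [span{1,x,y}]^2, nodes = vertices.
   ESqBil a b h : square [a,a+h]x[b,b+h], P1 = [span{1,x,y,xy}]^2, nodes = vertices.
   ESqRot a b h : same square, P1 = [span{1,x,y,x^2-y^2}]^2, nodes = edge midpoints. *)
Inductive element :=
| ETri of pt & pt & pt
| ESqBil of R & R & R
| ESqRot of R & R & R.

Definition nnodes (e : element) : nat :=
  match e with ETri _ _ _ => 3 | _ => 4 end.

Definition sq_vertices (a b h : R) : 4.-tuple pt :=
  [tuple (a, b); (a + h, b); (a + h, b + h); (a, b + h)].
Definition sq_midpoints (a b h : R) : 4.-tuple pt :=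
  [tuple (a + h / 2%:R, b); (a + h, b + h / 2%:R); (a + h / 2%:R, b + h);
         (a, b + h / 2%:R)].

Definition nodes (e : element) : 'I_(nnodes e) -> pt :=
  match e return 'I_(nnodes e) -> pt with
  | ETri P1 P2 P3 => fun i => tnth [tuple P1; P2; P3] i
  | ESqBil a b h => fun i => tnth (sq_vertices a b h) i
  | ESqRot a b h => fun i => tnth (sq_midpoints a b h) i
  end.
Arguments nodes : clear implicits.

Definition cross (P Q S : pt) : R :=
  (Q.1 - P.1) * (S.2 - P.2) - (Q.2 - P.2) * (S.1 - P.1).

Definition valid_element (e : element) : Prop :=
  match e with
  | ETri P1 P2 P3 => cross P1 P2 P3 != 0
  | ESqBil _ _ h | ESqRot _ _ h => 0 < h
  end.

Definition on_seg (P Q X : pt) : Prop :=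
  exists t : R, 0 <= t <= 1 /\ X = (P.1 + t * (Q.1 - P.1), P.2 + t * (Q.2 - P.2)).

Definition in_sq (a b h : R) (X : pt) : Prop :=
  a <= X.1 <= a + h /\ b <= X.2 <= b + h.

Definition inT (e : element) (X : pt) : Prop :=
  match e with
  | ETri P1 P2 P3 => exists t1 t2 t3 : R,
      [/\ 0 <= t1, 0 <= t2, 0 <= t3, t1 + t2 + t3 = 1 &
          X = (t1 * P1.1 + t2 * P2.1 + t3 * P3.1, t1 * P1.2 + t2 * P2.2 + t3 * P3.2)]
  | ESqBil a b h | ESqRot a b h => in_sq a b h X
  end.

Definition onBdT (e : element) (X : pt) : Prop :=
  match e with
  | ETri P1 P2 P3 => on_seg P1 P2 X \/ on_seg P2 P3 X \/ on_seg P3 P1 X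
  | ESqBil a b h | ESqRot a b h =>
      in_sq a b h X /\ (X.1 = a \/ X.1 = a + h \/ X.2 = b \/ X.2 = b + h)
  end.

Definition inPi (e : element) (p : bpoly) : Prop :=
  match e with
  | ETri _ _ _ => [/\ cxx p = 0, cxy p = 0 & cyy p = 0]
  | ESqBil _ _ _ => cxx p = 0 /\ cyy p = 0
  | ESqRot _ _ _ => cxy p = 0 /\ cyy p = - cxx p
  end.

Definition top_coef_eq (e : element) (u v : vpoly) : Prop :=
  match e with
  | ETri _ _ _ => True
  | ESqBil _ _ _ => cxy u.1 = cxy v.1 /\ cxy u.2 = cxy v.2
  | ESqRot _ _ _ => cxx u.1 = cxx v.1 /\ cxx u.2 = cxx v.2
  end.

(* signed position of X with respect to the line l through D with normal nb;
   T^+ = {side >= 0}, T^- = {side < 0} (points of l are given to T^+; the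
   IFE function is continuous across l so this is immaterial). *)
Definition side (D nb X : pt) : R := (X.1 - D.1) * nb.1 + (X.2 - D.2) * nb.2.
Definition onside (D nb : pt) (s : bool) (X : pt) : bool :=
  if s then 0 <= side D nb X else side D nb X < 0.

Definition traction (lam mu : R) (u : vpoly) (X nb : pt) : pt :=
  let u1x := bev (bdx u.1) X in let u1y := bev (bdy u.1) X in
  let u2x := bev (bdx u.2) X in let u2y := bev (bdy u.2) X in
  let dv := u1x + u2y in
  let s11 := lam * dv + 2%:R * mu * u1x in
  let s22 := lam * dv + 2%:R * mu * u2y in
  let s12 := mu * (u1y + u2x) in
  (s11 * nb.1 + s12 * nb.2, s12 * nb.1 + s22 * nb.2).

(* a piecewise function: u true = u^+ on T^+, u false = u^- on T^- *)
Definition pwfun := bool -> vpoly.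

Definition pw_eval (D nb : pt) (u : pwfun) (X : pt) : pt :=
  vev (u (0 <= side D nb X)) X.

Definition is_IFE (e : element) (lam mu : bool -> R) (D E F nb : pt)
  (u : pwfun) : Prop :=
  [/\ forall s, inPi e (u s).1 /\ inPi e (u s).2,
      (* continuity across l (on l cap T, the segment DE) *)
      forall X, on_seg D E X -> vev (u true) X = vev (u false) X,
      top_coef_eq e (u true) (u false) &
      traction (lam true) (mu true) (u true) F nb
        = traction (lam false) (mu false) (u false) F nb].

Definition unisolvent (e : element) (lam mu : bool -> R) (D E F nb : pt) : Prop :=
  forall u v : pwfun, is_IFE e lam mu D E F nb u -> is_IFE e lam mu D E F nb v ->
    (forall j, pw_eval D nb u (nodes e j) = pw_eval D nb v (nodes e j)) ->
    forall X, inT e X -> pw_eval D nb u X = pw_eval D nb v X.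

(* phi c i  stands for the shape function phi_{i + c|I|, T}  (c = 0, 1) *)
Definition is_shape_family (e : element) (lam mu : bool -> R) (D E F nb : pt)
  (phi : 'I_2 -> 'I_(nnodes e) -> pwfun) : Prop :=
  forall c i, is_IFE e lam mu D E F nb (phi c i) /\
    forall j (r : 'I_2),
      pcomp (pw_eval D nb (phi c i) (nodes e j)) r = ((r == c) && (i == j))%:R.

(* (d Phi^s_i)(X) : the 2x2 matrix [d phi^s_i (X), d phi^s_{i+|I|} (X)],
   d a (formal) differential operator acting on scalar polynomials *)
Definition PhiM (e : element) (phi : 'I_2 -> 'I_(nnodes e) -> pwfun)
  (d : bpoly -> bpoly) (s : bool) (i : 'I_(nnodes e)) (X : pt) : 'M[R]_2 :=
  \matrix_(r < 2, c < 2) bev (d (vcomp (phi c i s) r)) X.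

(* Kronecker product v^T (x) B of a column 2-vector v (given as a point) and a
   2x2 matrix B: the 2x4 matrix [v_1 B, v_2 B] *)
Definition kron_pt (v : pt) (B : 'M[R]_2) : 'M[R]_(2, 4) :=
  row_mx (v.1 *: B) (v.2 *: B).

Definition psub (P Q : pt) : pt := (P.1 - Q.1, P.2 - Q.2).

Definition Nbar (lam mu : R) (nb : pt) : 'M[R]_4 :=
  let n1 := nb.1 in let n2 := nb.2 in
  let rows := [:: [:: (lam + 2%:R * mu) * n1; mu * n2; mu * n2; lam * n1];
                  [:: lam * n2; mu * n1; mu * n1; (lam + 2%:R * mu) * n2];
                  [:: - n2; 0; n1; 0];
                  [:: 0; - n2; 0; n1]] in
  \matrix_(i < 4, j < 4) nth 0 (nth [::] rows i) j.

Definition Mbar (lam mu : bool -> R) (nb : pt) (s : bool) : 'M[R]_4 :=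
  invmx (Nbar (lam (~~ s)) (mu (~~ s)) nb) *m Nbar (lam s) (mu s) nb.

Definition Ij (j : 'I_2) : 'M[R]_(2, 4) :=
  if val j == 0%N then row_mx 1%:M 0 else row_mx 0 1%:M.

Definition ident_lhs (e : element) (lam mu : bool -> R) (D nb X : pt)
  (Xb : 'I_(nnodes e) -> pt) (phi : 'I_2 -> 'I_(nnodes e) -> pwfun)
  (d : bpoly -> bpoly) (s : bool) : 'M[R]_(2, 4) :=
  \sum_(i < nnodes e) kron_pt (psub (nodes e i) X) (PhiM phi d s i X)
  + \sum_(i < nnodes e | onside D nb (~~ s) (nodes e i))
      (kron_pt (psub (nodes e i) (Xb i)) (PhiM phi d s i X)
         *m (Mbar lam mu nb s - 1%:M)).

End IFE.

Arguments is_shape_family {R} e lam mu D E F nb phi.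
Arguments ident_lhs {R} e lam mu D nb X Xb phi d s.
Arguments PhiM {R} e phi d s i X.

(* Main.v *)
Require Import Defs.
From HB Require Import structures.
From mathcomp Require Import all_boot all_order all_algebra.
From mathcomp Require Import ring lra.
Import Order.TTheory GRing.Theory Num.Theory.
Local Open Scope ring_scope.

Set Implicit Arguments. Unset Strict Implicit. Unset Printing Implicit Defensive.


Section Aux.
Variable R : realFieldType.
Implicit Types (p q : bpoly R) (u v : vpoly R) (X Y : pt R).

Lemma sum2 (F : 'I_2 -> R) : \sum_(k < 2) F k = F (inord 0) + F (inord 1).
Proof.
rewrite !big_ord_recr big_ord0 /= add0r.
by congr (F _ + F _); apply: val_inj; rewrite /= inordK.
Qed.

Lemma sum4 (F : 'I_4 -> R) :
  \sum_(k < 4) F k = F (inord 0) + F (inord 1) + F (inord 2) + F (inord 3).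
Proof.
rewrite !big_ord_recr big_ord0 /= add0r.
by congr (F _ + F _ + F _ + F _); apply: val_inj; rewrite /= inordK.
Qed.

Lemma I2P (r : 'I_2) : r = inord 0 \/ r = inord 1.
Proof.
case: r => [[|[|n]] Hr]; [left|right|done]; apply: val_inj; by rewrite /= inordK.
Qed.

Lemma inord2E (i j : nat) : (i < 2)%N -> (j < 2)%N -> ((inord i : 'I_2) == inord j) = (i == j).
Proof. by move=> hi hj; rewrite -val_eqE /= !inordK. Qed.

Lemma row_mx_inord (A B : 'M[R]_2) (c : 'I_2) (k : 'I_4) :
  (row_mx A B : 'M_(2,4)) c k = if (val k < 2)%N then A c (inord k) else B c (inord (val k - 2)).
Proof.
rewrite mxE; case: splitP => j /= Hj; rewrite Hj.
- by rewrite ltn_ord inord_val.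
- by rewrite ltnNge leq_addr /= addKn inord_val.
Qed.

Lemma kron_mul (v : pt R) (B : 'M[R]_2) : kron_pt v B = B *m kron_pt v 1%:M.
Proof.
have := mul_mx_row B (v.1 *: (1%:M : 'M[R]_2)) (v.2 *: 1%:M).
rewrite -!scalemxAr !mulmx1 => H; exact: (esym H).
Qed.

Lemma kron1_mul (v : pt R) (g : 'cV[R]_4) (c : 'I_2) :
  (kron_pt v 1%:M *m g) c 0 = v.1 * g (inord c) 0 + v.2 * g (inord (2 + c)) 0.
Proof.
rewrite mxE sum4 !row_mx_inord !inordK //= !mxE.
have [->|->] := I2P c; rewrite !inordK //= !inord2E //=; ring.
Qed.


Definition Ninv (lam mu : R) (nb : pt R) : 'M[R]_4 :=
  let n1 := nb.1 in let n2 := nb.2 in let L := lam + 2%:R * mu in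
  let nu := n1^+2 + n2^+2 in
  let al := [:: n1 / L; n2 / L; lam * n2 / L; - (lam * n1) / L] in
  let be := [:: - n2 / mu; n1 / mu; - n1; - n2] in
  let g1 := [:: 0; 0; 1; 0] in let g2 := [:: 0; 0; 0; 1] in
  \matrix_(i < 4, j < 4)
   let a := nth 0 al j in let b := nth 0 be j in
   nth 0 [:: (a * n1^+2 - b * n1 * n2) / nu^+2 - nth 0 g1 j * n2 / nu;
             (a * n1 * n2 + b * n1^+2) / nu^+2 - nth 0 g2 j * n2 / nu;
             (a * n1 * n2 - b * n2^+2) / nu^+2 + nth 0 g1 j * n1 / nu;
             (a * n2^+2 + b * n1 * n2) / nu^+2 + nth 0 g2 j * n1 / nu] i.

Lemma Ninv_mul (lam mu : R) (nb : pt R) : 0 < lam -> 0 < mu -> nb.1^+2 + nb.2^+2 != 0 ->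
  Ninv lam mu nb *m Nbar lam mu nb = 1%:M.
Proof.
move=> hl hm hn.
have hL : lam + 2%:R * mu != 0.
  by apply/lt0r_neq0; apply: addr_gt0 => //; apply: mulr_gt0.
have hm' : mu != 0 by apply: lt0r_neq0.
apply/matrixP => i j; rewrite !mxE sum4 !mxE !inordK //.
case: i => [[|[|[|[|i]]]] Hi] //; case: j => [[|[|[|[|j]]]] Hj] //=; field; by apply/and3P.
Qed.

Lemma Nbar_unit (lam mu : R) (nb : pt R) : 0 < lam -> 0 < mu -> nb.1^+2 + nb.2^+2 != 0 ->
  Nbar lam mu nb \in unitmx.
Proof. by move=> hl hm hn; case: (mulmx1_unit (Ninv_mul hl hm hn)). Qed.


Definition Esel : 'M[R]_(2,4) := row_mx (0 : 'M[R]_2) 1%:M.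

Lemma Esel_N (lam mu : R) (nb : pt R) : Esel *m Nbar lam mu nb = kron_pt (- nb.2, nb.1) 1%:M.
Proof.
apply/matrixP => c k; rewrite /kron_pt /Esel mxE sum4 !row_mx_inord !inordK //= !mxE !inordK //.
have [->|->] := I2P c; case: k => [[|[|[|[|k]]]] Hk] //=; rewrite ?inordK //= !inord2E //=; ring.
Qed.

Lemma eq_diff (x y z : R) : x - y = z -> z = 0 -> x = y.
Proof. by move=> h hz; apply/eqP; rewrite -subr_eq0 h hz. Qed.

Lemma perp_decomp (nb w : pt R) : nb.1^+2 + nb.2^+2 = 1 -> w.1 * nb.1 + w.2 * nb.2 = 0 ->
  w = ((- nb.2 * w.1 + nb.1 * w.2) * (- nb.2), (- nb.2 * w.1 + nb.1 * w.2) * nb.1).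
Proof.
case: w => w1 w2 /= hn hw; congr pair.
- apply: (eq_diff (z := w1 * (1 - (nb.1^+2 + nb.2^+2)) + nb.1 * (w1 * nb.1 + w2 * nb.2))).
    ring.
  by rewrite hn hw subrr !mulr0 addr0.
- apply: (eq_diff (z := w2 * (1 - (nb.1^+2 + nb.2^+2)) + nb.2 * (w1 * nb.1 + w2 * nb.2))).
    ring.
  by rewrite hn hw subrr !mulr0 addr0.
Qed.

Lemma kron_scale (t a b : R) (B : 'M[R]_2) : kron_pt (t * a, t * b) B = t *: kron_pt (a, b) B.
Proof.
rewrite /kron_pt /=; have := scale_row_mx t (a *: B) (b *: B).
rewrite !scalerA => H; exact: (esym H).
Qed.

Lemma kron_perp (lam mu lam' mu' : R) (nb w : pt R) : nb.1^+2 + nb.2^+2 = 1 ->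
  w.1 * nb.1 + w.2 * nb.2 = 0 -> Nbar lam' mu' nb \in unitmx ->
  kron_pt w 1%:M *m (invmx (Nbar lam' mu' nb) *m Nbar lam mu nb - 1%:M) = 0.
Proof.
move=> hn hw hu.
have -> : kron_pt w 1%:M = (- nb.2 * w.1 + nb.1 * w.2) *: kron_pt (- nb.2, nb.1) 1%:M.
  by rewrite {1}(perp_decomp hn hw) kron_scale.
rewrite -(Esel_N lam' mu') -scalemxAl -!mulmxA mulmxBr mulmxA mulmxV // mul1mx mulmx1.
by rewrite mulmxBr !Esel_N subrr scaler0.
Qed.

Lemma traction_lin (lam mu : R) (u : vpoly R) (F nb : pt R) (g : 'cV[R]_4) :
  bev (bdx u.1) F = g (inord 0) 0 -> bev (bdx u.2) F = g (inord 1) 0 ->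
  bev (bdy u.1) F = g (inord 2) 0 -> bev (bdy u.2) F = g (inord 3) 0 ->
  traction lam mu u F nb =
    ((Nbar lam mu nb *m g) (inord 0) 0, (Nbar lam mu nb *m g) (inord 1) 0).
Proof.
move=> h1 h2 h3 h4; rewrite /traction h1 h2 h3 h4 !mxE !sum4 !mxE !inordK //=.
congr pair; ring.
Qed.

Definition lin2 (P : pt R) (a b : R) : bpoly R := BPoly (-(P.1 * a + P.2 * b)) a b 0 0 0.
Definition linv (P : pt R) (g : 'cV[R]_4) : vpoly R :=
  (lin2 P (g (inord 0) 0) (g (inord 2) 0), lin2 P (g (inord 1) 0) (g (inord 3) 0)).
Lemma bev_lin2 P a b Y : bev (lin2 P a b) Y = (Y.1 - P.1) * a + (Y.2 - P.2) * b.
Proof. rewrite /bev /=; ring. Qed.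
Lemma linvE P g Y (r : 'I_2) : bev (vcomp (linv P g) r) Y = (kron_pt (psub Y P) 1%:M *m g) r 0.
Proof. by rewrite kron1_mul; have [->|->] := I2P r; rewrite /vcomp /= !inordK //= /bev /=; ring. Qed.

Definition badd p q := BPoly (c0 p + c0 q) (cx p + cx q) (cy p + cy q) (cxx p + cxx q) (cxy p + cxy q) (cyy p + cyy q).
Definition bscale (a : R) p := BPoly (a * c0 p) (a * cx p) (a * cy p) (a * cxx p) (a * cxy p) (a * cyy p).
Definition bzero : bpoly R := BPoly 0 0 0 0 0 0.

Lemma bev_add p q X : bev (badd p q) X = bev p X + bev q X.
Proof. rewrite /bev /=; ring. Qed.
Lemma bev_scale a p X : bev (bscale a p) X = a * bev p X.
Proof. rewrite /bev /=; ring. Qed.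
Lemma bev_zero X : bev bzero X = 0.
Proof. rewrite /bev /=; ring. Qed.

Definition dlin (d : bpoly R -> bpoly R) :=
  [/\ forall p q, d (badd p q) = badd (d p) (d q),
      forall a p, d (bscale a p) = bscale a (d p) & d bzero = bzero].

Lemma dlin_id : dlin id. Proof. by []. Qed.
Lemma dlin_bd j : dlin (bd j).
Proof.
rewrite /bd; case: (val j == 0%N); split => [p q|a p|]; rewrite /bdx /bdy /badd /bscale /bzero /=;
  congr BPoly; ring.
Qed.
Lemma dlin_comp d1 d2 : dlin d1 -> dlin d2 -> dlin (fun p => d1 (d2 p)).
Proof. move=> [h1 h2 h3] [k1 k2 k3]; split => [p q|a p|]; by rewrite ?k1 ?k2 ?k3 ?h1 ?h2 ?h3. Qed.


Definition vadd (u v : vpoly R) : vpoly R := (badd u.1 v.1, badd u.2 v.2).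
Definition vscale (a : R) (u : vpoly R) : vpoly R := (bscale a u.1, bscale a u.2).
Definition padd (u v : pwfun R) : pwfun R := fun b => vadd (u b) (v b).
Definition pscale (a : R) (u : pwfun R) : pwfun R := fun b => vscale a (u b).
Definition pzero : pwfun R := fun _ => (bzero, bzero).

Lemma inPi_add (e : element R) p q : inPi e p -> inPi e q -> inPi e (badd p q).
Proof.
case: e => [? ? ?|? ? ?|? ? ?] /=.
- move=> [h1 h2 h3] [k1 k2 k3]; split; rewrite ?h1 ?h2 ?h3 ?k1 ?k2 ?k3; ring.
- move=> [h1 h2] [k1 k2]; split; rewrite ?h1 ?h2 ?k1 ?k2; ring.
- move=> [h1 h2] [k1 k2]; split; rewrite ?h1 ?h2 ?k1 ?k2; ring.
Qed.

Lemma inPi_scale (e : element R) a p : inPi e p -> inPi e (bscale a p).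
Proof.
case: e => [? ? ?|? ? ?|? ? ?] /=.
- move=> [h1 h2 h3]; split; rewrite ?h1 ?h2 ?h3; ring.
- move=> [h1 h2]; split; rewrite ?h1 ?h2; ring.
- move=> [h1 h2]; split; rewrite ?h1 ?h2; ring.
Qed.

Lemma inPi_lin (e : element R) p : cxx p = 0 -> cxy p = 0 -> cyy p = 0 -> inPi e p.
Proof.
move=> h1 h2 h3; case: e => [? ? ?|? ? ?|? ? ?] /=; split; rewrite ?h1 ?h2 ?h3 //; ring.
Qed.

Lemma traction_add (lam mu : R) u v (F nb : pt R) :
  traction lam mu (vadd u v) F nb =
  ((traction lam mu u F nb).1 + (traction lam mu v F nb).1,
   (traction lam mu u F nb).2 + (traction lam mu v F nb).2).
Proof. rewrite /traction /bev /=; congr pair; ring. Qed.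

Lemma traction_scale (lam mu : R) a u (F nb : pt R) :
  traction lam mu (vscale a u) F nb =
  (a * (traction lam mu u F nb).1, a * (traction lam mu u F nb).2).
Proof. rewrite /traction /bev /=; congr pair; ring. Qed.

Section IFEc.
Variables (e : element R) (lam mu : bool -> R) (D E F nb : pt R).

Lemma IFE_add (u v : pwfun R) : is_IFE e lam mu D E F nb u -> is_IFE e lam mu D E F nb v ->
  is_IFE e lam mu D E F nb (padd u v).
Proof.
move=> [hu1 hu2 hu3 hu4] [hv1 hv2 hv3 hv4]; split.
- move=> b; have [a1 a2] := hu1 b; have [b1 b2] := hv1 b; split; exact: inPi_add.
- move=> Y hY; move: (hu2 Y hY) (hv2 Y hY); rewrite /padd /vadd /vev /= !bev_add.
  by case=> -> -> [-> ->].
- move: hu3 hv3; rewrite /padd /vadd; case: e => //= ? ? ? [h1 h2] [k1 k2];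
    by rewrite h1 h2 k1 k2.
- by move: hu4 hv4; rewrite /padd !traction_add => -> ->.
Qed.

Lemma IFE_scale (a : R) (u : pwfun R) : is_IFE e lam mu D E F nb u -> is_IFE e lam mu D E F nb (pscale a u).
Proof.
move=> [hu1 hu2 hu3 hu4]; split.
- move=> b; have [a1 a2] := hu1 b; split; exact: inPi_scale.
- move=> Y hY; move: (hu2 Y hY); rewrite /pscale /vscale /vev /= !bev_scale.
  by case=> -> ->.
- move: hu3; rewrite /pscale /vscale; case: e => //= ? ? ? [h1 h2];
    by rewrite h1 h2.
- by move: hu4; rewrite /pscale !traction_scale => ->.
Qed.

Lemma IFE_zero : is_IFE e lam mu D E F nb pzero.
Proof.
split.
- by move=> b; split; apply: inPi_lin.
- by [].
- by case: e.
- rewrite /traction /bev /=; congr pair; ring.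
Qed.

End IFEc.

End Aux.


Section Geo.
Variable R : realFieldType.

Lemma onsideE (D nb Y : pt R) b : onside D nb b Y = ((0 <= side D nb Y) == b).
Proof. by rewrite /onside; case: b; rewrite ?eqb_id // eqbF_neg ltNge. Qed.

Lemma nn3 (a b c x y z : R) : 0 <= a -> 0 <= b -> 0 <= c -> 0 <= x -> 0 <= y -> 0 <= z ->
  0 <= a * x + b * y + c * z.
Proof.
by move=> *; apply: addr_ge0; [apply: addr_ge0|]; apply: mulr_ge0.
Qed.

Lemma conv_bound (lo hi x y z al be : R) : lo <= x <= hi -> lo <= y <= hi -> lo <= z <= hi ->
  0 <= al -> 0 <= be -> al + be <= 1 -> lo <= x + al * (y - x) + be * (z - x) <= hi.
Proof.
move=> /andP[hx1 hx2] /andP[hy1 hy2] /andP[hz1 hz2] ha hb hab.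
have h : 0 <= 1 - al - be by lra.
apply/andP; split.
- rewrite -subr_ge0 (_ : _ - lo = (1 - al - be) * (x - lo) + al * (y - lo) + be * (z - lo)).
    by apply: nn3; rewrite // subr_ge0.
  ring.
- rewrite -subr_ge0 (_ : _ - _ = (1 - al - be) * (hi - x) + al * (hi - y) + be * (hi - z)).
    by apply: nn3; rewrite // subr_ge0.
  ring.
Qed.

Lemma convex3 (e : element R) (P Q S : pt R) al be :
  inT e P -> inT e Q -> inT e S -> 0 <= al -> 0 <= be -> al + be <= 1 ->
  inT e (P.1 + al * (Q.1 - P.1) + be * (S.1 - P.1), P.2 + al * (Q.2 - P.2) + be * (S.2 - P.2)).
Proof.
move=> hP hQ hS ha hb hab; have h : 0 <= 1 - al - be by lra.
case: e hP hQ hS => [P1 P2 P3|a b h'|a b h'] /=.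
- move=> [t1 [t2 [t3 [h1 h2 h3 h4 ->]]]] [u1 [u2 [u3 [k1 k2 k3 k4 ->]]]]
         [w1 [w2 [w3 [l1 l2 l3 l4 ->]]]] /=.
  exists ((1 - al - be) * t1 + al * u1 + be * w1), ((1 - al - be) * t2 + al * u2 + be * w2),
         ((1 - al - be) * t3 + al * u3 + be * w3).
  split; try by apply: nn3.
  + apply: (eq_diff (z := (1 - al - be) * (t1 + t2 + t3 - 1) + al * (u1 + u2 + u3 - 1)
                            + be * (w1 + w2 + w3 - 1))); first ring.
    by rewrite h4 k4 l4 !subrr !mulr0 !addr0.
  + congr pair; ring.
- move=> [hP1 hP2] [hQ1 hQ2] [hS1 hS2]; split; exact: conv_bound.
- move=> [hP1 hP2] [hQ1 hQ2] [hS1 hS2]; split; exact: conv_bound.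
Qed.

Lemma onBd_in (e : element R) X : onBdT e X -> inT e X.
Proof.
case: e => [P1 P2 P3|a b h|a b h] /=; last 2 first.
- by case.
- by case.
move=> [[t [/andP[t0 t1] ->]] | [[t [/andP[t0 t1] ->]] | [t [/andP[t0 t1] ->]]]].
- exists (1 - t), t, 0; split => //; [by rewrite subr_ge0 | ring | congr pair; ring].
- exists 0, (1 - t), t; split => //; [by rewrite subr_ge0 | ring | congr pair; ring].
- exists t, 0, (1 - t); split => //; [by rewrite subr_ge0 | ring | congr pair; ring].
Qed.


Definition nd (P V W : pt R) (a b : R) : pt R :=
  (P.1 + a * V.1 + b * W.1, P.2 + a * V.2 + b * W.2).

Lemma lc6 (x F1 F2 F3 F4 F5 F6 c1 c2 c3 c4 c5 c6 : R) :
  F1 = 0 -> F2 = 0 -> F3 = 0 -> F4 = 0 -> F5 = 0 -> F6 = 0 ->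
  x = c1 * F1 + c2 * F2 + c3 * F3 + c4 * F4 + c5 * F5 + c6 * F6 -> x = 0.
Proof. by move=> -> -> -> -> -> -> ->; rewrite !mulr0 !addr0. Qed.

Lemma cancel_nz (k x y : R) : k != 0 -> k * (x - y) = 0 -> x = y.
Proof. by move=> hk /eqP; rewrite mulf_eq0 (negbTE hk) /= subr_eq0 => /eqP. Qed.

Lemma bpoly_eq6 (p q : bpoly R) (P V W : pt R) : V.1 * W.2 - V.2 * W.1 != 0 ->
  (forall a b : nat, (a + b <= 2)%N ->
     bev p (nd P V W a%:R b%:R) = bev q (nd P V W a%:R b%:R)) -> p = q.
Proof.
move=> hd H.
have f : forall a b : nat, (a + b <= 2)%N ->
    bev p (nd P V W a%:R b%:R) - bev q (nd P V W a%:R b%:R) = 0.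
  by move=> a b hab; rewrite H // subrr.
have f00 := f 0%N 0%N isT; have f10 := f 1%N 0%N isT; have f20 := f 2%N 0%N isT.
have f01 := f 0%N 1%N isT; have f02 := f 0%N 2%N isT; have f11 := f 1%N 1%N isT.
move: f00 f10 f20 f01 f02 f11 {H f}.
case: p => p0 p1 p2 p3 p4 p5; case: q => q0 q1 q2 q3 q4 q5.
case: P => P1 P2; case: V hd => V1 V2; case: W => W1 W2 /= hd.
rewrite /bev /nd /=.
move=> f00 f10 f20 f01 f02 f11.
have hk : 2%:R * (V1 * W2 - V2 * W1) ^+ 2 != 0 by rewrite mulf_neq0 ?pnatr_eq0 // expf_neq0.
have e3 : p3 = q3.
  apply: (cancel_nz hk); apply: (lc6 f00 f10 f20 f01 f02 f11
     (c1 := W2^+2 - 2%:R * V2 * W2 + V2^+2) (c2 := -2%:R * W2^+2 + 2%:R * V2 * W2) (c3 := W2^+2)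
     (c4 := 2%:R * V2 * W2 - 2%:R * V2^+2) (c5 := V2^+2) (c6 := - 2%:R * V2 * W2)).
  ring.
have e5 : p5 = q5.
  apply: (cancel_nz hk); apply: (lc6 f00 f10 f20 f01 f02 f11
     (c1 := W1^+2 - 2%:R * V1 * W1 + V1^+2) (c2 := -2%:R * W1^+2 + 2%:R * V1 * W1) (c3 := W1^+2)
     (c4 := 2%:R * V1 * W1 - 2%:R * V1^+2) (c5 := V1^+2) (c6 := - 2%:R * V1 * W1)).
  ring.
have e4 : p4 = q4.
  apply: (cancel_nz hk); apply: (lc6 f00 f10 f20 f01 f02 f11
     (c1 := -2%:R * W1 * W2 + 2%:R * (V1 * W2 + V2 * W1) - 2%:R * V1 * V2)
     (c2 := 4%:R * W1 * W2 - 2%:R * (V1 * W2 + V2 * W1)) (c3 := -2%:R * W1 * W2)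
     (c4 := -2%:R * (V1 * W2 + V2 * W1) + 4%:R * V1 * V2) (c5 := -2%:R * V1 * V2)
     (c6 := 2%:R * (V1 * W2 + V2 * W1))).
  ring.
subst q3 q4 q5.
have e1 : p1 = q1.
  apply: (cancel_nz hd); apply: (lc6 f00 f10 f20 f01 f02 f11
     (c1 := V2 - W2) (c2 := W2) (c3 := 0) (c4 := - V2) (c5 := 0) (c6 := 0)).
  ring.
have e2 : p2 = q2.
  apply: (cancel_nz hd); apply: (lc6 f00 f10 f20 f01 f02 f11
     (c1 := W1 - V1) (c2 := - W1) (c3 := 0) (c4 := V1) (c5 := 0) (c6 := 0)).
  ring.
subst q1 q2.
have e0 : p0 = q0.
  apply: (cancel_nz (k := 1) (oner_neq0 _)); apply: (lc6 f00 f10 f20 f01 f02 f11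
     (c1 := 1) (c2 := 0) (c3 := 0) (c4 := 0) (c5 := 0) (c6 := 0)).
  ring.
by subst q0.
Qed.


Lemma region (e : element R) (D E nb Yp Zm : pt R) (u v : pwfun R) (s : bool) :
  onBdT e D -> onBdT e E -> D <> E -> side D nb E = 0 -> nb.1^+2 + nb.2^+2 = 1 ->
  inT e Yp -> inT e Zm -> 0 < side D nb Yp -> side D nb Zm < 0 ->
  (forall Y, inT e Y -> pw_eval D nb u Y = pw_eval D nb v Y) -> u s = v s.
Proof.
move=> hD hE hDE hsE hn hY hZ hsY hsZ huv.
have hD' := onBd_in hD; have hE' := onBd_in hE.
set t := - nb.2 * (E.1 - D.1) + nb.1 * (E.2 - D.2).
have ht : t != 0.
  apply/eqP => t0; apply: hDE.
  have := perp_decomp (w := psub E D) hn hsE; rewrite /= -/t t0 !mul0r; case=> h1 h2.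
  rewrite [D]surjective_pairing [E]surjective_pairing; congr pair; apply/eqP;
    by rewrite eq_sym -subr_eq0 ?h1 ?h2.
have hcr : forall y : pt R, (E.1 - D.1) * y.2 - (E.2 - D.2) * y.1 = - t * (y.1 * nb.1 + y.2 * nb.2).
  move=> y; apply: (eq_diff (z := (1 - (nb.1^+2 + nb.2^+2)) * ((E.1 - D.1) * y.2 - (E.2 - D.2) * y.1)
                               + side D nb E * (nb.1 * y.2 - nb.2 * y.1))).
    rewrite /t /side; ring.
  by rewrite hn hsE subrr !mul0r addr0.
have key : forall P V W : pt R, V.1 * W.2 - V.2 * W.1 != 0 ->
   (forall a b : nat, (a + b <= 2)%N -> inT e (nd P V W a%:R b%:R) /\
        (0 <= side D nb (nd P V W a%:R b%:R)) = s) -> u s = v s.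
  move=> P V W hd hnd.
  have hv : forall a b : nat, (a + b <= 2)%N ->
      vev (u s) (nd P V W a%:R b%:R) = vev (v s) (nd P V W a%:R b%:R).
    by move=> a b hab; have [h1 h2] := hnd a b hab; have := huv _ h1; rewrite /pw_eval h2.
  rewrite [u s]surjective_pairing [v s]surjective_pairing; congr pair;
    apply: (bpoly_eq6 hd) => a b hab; have := hv a b hab; rewrite /vev => -[h1 h2].
  - exact: h1.
  - exact: h2.
have hab2 : forall a b : nat, (a + b <= 2)%N -> (a%:R + b%:R <= 2%:R :> R).
  by move=> a b hab; rewrite -natrD ler_nat.
have sDD : side D nb D = 0 by rewrite /side !subrr !mul0r addr0.
case: s key => key.
- apply: (key D ((E.1 - D.1)/2%:R, (E.2 - D.2)/2%:R) ((Yp.1 - D.1)/2%:R, (Yp.2 - D.2)/2%:R)).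
    have -> : (E.1 - D.1)/2%:R * ((Yp.2 - D.2)/2%:R) - (E.2 - D.2)/2%:R * ((Yp.1 - D.1)/2%:R)
           = (- t * side D nb Yp) / 4%:R.
      by rewrite -(hcr (psub Yp D)) /=; field.
    apply: mulf_neq0; [apply: mulf_neq0; [by rewrite oppr_eq0 | exact: lt0r_neq0]
                      | by rewrite invr_eq0 pnatr_eq0].
  move=> a b hab; have h2 := hab2 a b hab.
  have ha : 0 <= a%:R :> R := ler0n _ _.
  have hb : 0 <= b%:R :> R := ler0n _ _.
  have -> : nd D ((E.1 - D.1)/2%:R, (E.2 - D.2)/2%:R) ((Yp.1 - D.1)/2%:R, (Yp.2 - D.2)/2%:R)
              a%:R b%:R =
      (D.1 + (a%:R/2%:R) * (E.1 - D.1) + (b%:R/2%:R) * (Yp.1 - D.1),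
       D.2 + (a%:R/2%:R) * (E.2 - D.2) + (b%:R/2%:R) * (Yp.2 - D.2)).
    by rewrite /nd /=; congr pair; ring.
  split.
  + apply: convex3 => //; [apply: divr_ge0 | apply: divr_ge0 | lra] => //.
  + have -> : side D nb (D.1 + (a%:R/2%:R) * (E.1 - D.1) + (b%:R/2%:R) * (Yp.1 - D.1),
       D.2 + (a%:R/2%:R) * (E.2 - D.2) + (b%:R/2%:R) * (Yp.2 - D.2))
       = (a%:R/2%:R) * side D nb E + (b%:R/2%:R) * side D nb Yp by rewrite /side /=; ring.
    rewrite hsE mulr0 add0r; apply/idP; apply: mulr_ge0; [apply: divr_ge0 | exact: ltW] => //.
- apply: (key Zm ((D.1 - Zm.1)/4%:R, (D.2 - Zm.2)/4%:R) ((E.1 - Zm.1)/4%:R, (E.2 - Zm.2)/4%:R)).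
    have -> : (D.1 - Zm.1)/4%:R * ((E.2 - Zm.2)/4%:R) - (D.2 - Zm.2)/4%:R * ((E.1 - Zm.1)/4%:R)
           = (- t * side D nb Zm) / 16%:R.
      by rewrite -(hcr (psub Zm D)) /=; field.
    apply: mulf_neq0; [apply: mulf_neq0; [by rewrite oppr_eq0 | exact: ltr0_neq0]
                      | by rewrite invr_eq0 pnatr_eq0].
  move=> a b hab; have h2 := hab2 a b hab.
  have ha : 0 <= a%:R :> R := ler0n _ _.
  have hb : 0 <= b%:R :> R := ler0n _ _.
  have -> : nd Zm ((D.1 - Zm.1)/4%:R, (D.2 - Zm.2)/4%:R) ((E.1 - Zm.1)/4%:R, (E.2 - Zm.2)/4%:R)
              a%:R b%:R =
      (Zm.1 + (a%:R/4%:R) * (D.1 - Zm.1) + (b%:R/4%:R) * (E.1 - Zm.1),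
       Zm.2 + (a%:R/4%:R) * (D.2 - Zm.2) + (b%:R/4%:R) * (E.2 - Zm.2)).
    by rewrite /nd /=; congr pair; ring.
  split.
  + apply: convex3 => //; [apply: divr_ge0 | apply: divr_ge0 | lra] => //.
  + have -> : side D nb (Zm.1 + (a%:R/4%:R) * (D.1 - Zm.1) + (b%:R/4%:R) * (E.1 - Zm.1),
       Zm.2 + (a%:R/4%:R) * (D.2 - Zm.2) + (b%:R/4%:R) * (E.2 - Zm.2))
       = (1 - a%:R/4%:R - b%:R/4%:R) * side D nb Zm + (a%:R/4%:R) * side D nb D
         + (b%:R/4%:R) * side D nb E by rewrite /side /=; ring.
    rewrite hsE sDD !mulr0 !addr0; apply/negbTE; rewrite -ltNge pmulr_rlt0 //; lra.
Qed.

End Geo.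


Section Main.
Variable R : realFieldType.

Definition Ufun (s : bool) (X D : pt R) (M : 'M[R]_4) (g : 'cV[R]_4) : pwfun R :=
  fun b => if b == s then linv X g else vadd (linv X g) (linv D ((M - 1%:M) *m g)).

Lemma vcomp_vadd (v w : vpoly R) r : vcomp (vadd v w) r = badd (vcomp v r) (vcomp w r).
Proof. by rewrite /vcomp; case: ifP. Qed.

Lemma pcomp_vev (v : vpoly R) Y r : Defs.pcomp (vev v Y) r = bev (vcomp v r) Y.
Proof. by rewrite /Defs.pcomp /vcomp; case: ifP. Qed.

Lemma kron_add (v w : pt R) (B : 'M[R]_2) :
  kron_pt v B + kron_pt w B = kron_pt (v.1 + w.1, v.2 + w.2) B.
Proof.
rewrite /kron_pt /=; have := add_row_mx (v.1 *: B) (v.2 *: B) (w.1 *: B) (w.2 *: B).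
rewrite -!scalerDl => H; exact: H.
Qed.

Lemma pt_eq_pcomp (P Q : pt R) : (forall r, Defs.pcomp P r = Defs.pcomp Q r) -> P = Q.
Proof.
move=> H; have := H (inord 0); have := H (inord 1); rewrite /Defs.pcomp /= !inordK //=.
by case: P Q {H} => [p1 p2] [q1 q2] /= -> ->.
Qed.

Lemma mx_eq_col (A B : 'M[R]_(2,4)) :
  (forall (g : 'cV[R]_4) r, (A *m g) r 0 = (B *m g) r 0) -> A = B.
Proof. move=> H; apply/matrixP => r k; have := H (delta_mx k 0) r; by rewrite -!colE !mxE. Qed.

Lemma U_IFE (e : element R) (lam mu : bool -> R) (D E F nb X : pt R) s g :
  (forall b, 0 < lam b) -> (forall b, 0 < mu b) -> nb.1^+2 + nb.2^+2 = 1 ->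
  side D nb E = 0 ->
  is_IFE e lam mu D E F nb (Ufun s X D (Mbar lam mu nb s) g).
Proof.
move=> hl hm hn hsE.
have hn' : nb.1^+2 + nb.2^+2 != 0 by rewrite hn oner_neq0.
have hu : forall b, Nbar (lam b) (mu b) nb \in unitmx by move=> b; apply: Nbar_unit.
set M := Mbar lam mu nb s.
have NM : Nbar (lam (~~ s)) (mu (~~ s)) nb *m M = Nbar (lam s) (mu s) nb.
  by rewrite /M /Mbar mulmxA mulmxV // mul1mx.
have Mg : M *m g = g + (M - 1%:M) *m g by rewrite mulmxBl mul1mx addrC subrK.
have hMd : M = invmx (Nbar (lam (~~ s)) (mu (~~ s)) nb) *m Nbar (lam s) (mu s) nb by [].
clearbody M.
split.
- move=> b; rewrite /Ufun; case: (b == s); split; apply: inPi_lin => /=; by rewrite ?addr0.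
- move=> Y [tt [_ hY]].
  have hsY : (Y.1 - D.1) * nb.1 + (Y.2 - D.2) * nb.2 = 0.
    rewrite hY /=; apply: (eq_diff (z := tt * side D nb E)); first by rewrite /side; ring.
    by rewrite hsE mulr0.
  have hz : forall r, bev (vcomp (linv D ((M - 1%:M) *m g)) r) Y = 0.
    move=> r; rewrite linvE mulmxA hMd (kron_perp _ _ (w := psub Y D) hn hsY (hu (~~ s))).
    by rewrite mul0mx mxE.
  have hz1 := hz (inord 0); have hz2 := hz (inord 1).
  rewrite /vcomp /= !inordK //= in hz1 hz2.
  rewrite /Ufun; case: (true == s); case: (false == s);
    by rewrite /vev /vadd /= ?bev_add ?hz1 ?hz2 ?addr0.
- case: e => //= *; rewrite /Ufun; case: (true == s); case: (false == s); split;
    by rewrite /= ?addr0.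
- have T1 : traction (lam s) (mu s) (Ufun s X D M g s) F nb =
      ((Nbar (lam s) (mu s) nb *m g) (inord 0) 0, (Nbar (lam s) (mu s) nb *m g) (inord 1) 0).
    rewrite /Ufun eqxx; apply: traction_lin; rewrite /bev /=; ring.
  have T2 : traction (lam (~~ s)) (mu (~~ s)) (Ufun s X D M g (~~ s)) F nb =
      ((Nbar (lam s) (mu s) nb *m g) (inord 0) 0, (Nbar (lam s) (mu s) nb *m g) (inord 1) 0).
    have hns : (~~ s == s) = false by case: (s).
    rewrite -NM -mulmxA /Ufun hns; set h := (M - 1%:M) *m g in Mg *.
    by apply: traction_lin; rewrite Mg mxE /bev /=; ring.
  by move: T1 T2; case: (s) => /= -> ->.
Qed.


Lemma coefU (D nb X A Xb : pt R) (lam mu : bool -> R) s g (c : 'I_2) :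
  (forall b, 0 < lam b) -> (forall b, 0 < mu b) -> nb.1^+2 + nb.2^+2 = 1 -> side D nb Xb = 0 ->
  Defs.pcomp (pw_eval D nb (Ufun s X D (Mbar lam mu nb s) g) A) c =
  ((kron_pt (psub A X) 1%:M + (if onside D nb (~~ s) A then
      kron_pt (psub A Xb) 1%:M *m (Mbar lam mu nb s - 1%:M) else 0)) *m g) c 0.
Proof.
move=> hl hm hn hXb.
have hu : Nbar (lam (~~ s)) (mu (~~ s)) nb \in unitmx.
  by apply: Nbar_unit => //; rewrite hn oner_neq0.
rewrite /pw_eval /Ufun onsideE pcomp_vev.
case h: ((0 <= side D nb A) == s).
- have -> : ((0 <= side D nb A) == ~~ s) = false by move: h; case: (0 <= _); case: (s).
  by rewrite addr0 linvE.
- have -> : ((0 <= side D nb A) == ~~ s) = true by move: h; case: (0 <= _); case: (s).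
  have addE : forall (P Q : 'cV[R]_2), (P + Q) c 0 = P c 0 + Q c 0 by move=> P Q; rewrite mxE.
  rewrite vcomp_vadd bev_add !linvE (mulmxDl (kron_pt (psub A X) 1%:M)) addE; congr (_ + _).
  have -> : psub A D = ((psub A Xb).1 + (psub Xb D).1, (psub A Xb).2 + (psub Xb D).2).
    by rewrite /psub /=; congr pair; ring.
  rewrite -kron_add mulmxA mulmxDl (kron_perp _ _ (w := psub Xb D) hn hXb hu) addr0 //.
Qed.

Lemma ident_decomp (e : element R) (lam mu : bool -> R) (D nb X : pt R)
  (Xb : 'I_(nnodes e) -> pt R) (phi : 'I_2 -> 'I_(nnodes e) -> pwfun R) d s :
  ident_lhs e lam mu D nb X Xb phi d s =
  \sum_(i < nnodes e) PhiM e phi d s i X *m (kron_pt (psub (@nodes _ e i) X) 1%:M +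
     (if onside D nb (~~ s) (@nodes _ e i) then
        kron_pt (psub (@nodes _ e i) (Xb i)) 1%:M *m (Mbar lam mu nb s - 1%:M) else 0)).
Proof.
rewrite /ident_lhs [X in _ + X = _]big_mkcond -big_split /=; apply: eq_bigr => i _.
rewrite !(kron_mul _ (PhiM _ _ _ _ _ _)) [RHS]mulmxDr; case: ifP => _; by rewrite ?mulmxA ?mulmx0 ?addr0.
Qed.

Lemma pw_add (D nb Y : pt R) r (u v : pwfun R) :
  Defs.pcomp (pw_eval D nb (padd u v) Y) r =
  Defs.pcomp (pw_eval D nb u Y) r + Defs.pcomp (pw_eval D nb v Y) r.
Proof. by rewrite /pw_eval !pcomp_vev /padd vcomp_vadd bev_add. Qed.

Lemma pw_zero (D nb Y : pt R) r : Defs.pcomp (pw_eval D nb (pzero R) Y) r = 0.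
Proof. by rewrite /pw_eval pcomp_vev /pzero /vcomp; case: ifP => _; rewrite bev_zero. Qed.

Lemma pw_scale (D nb Y : pt R) r a (u : pwfun R) :
  Defs.pcomp (pw_eval D nb (pscale a u) Y) r = a * Defs.pcomp (pw_eval D nb u Y) r.
Proof. by rewrite /pw_eval !pcomp_vev /pscale /vscale /vcomp; case: ifP => _; rewrite bev_scale. Qed.

Lemma pw_sum (D nb Y : pt R) r (I : finType) (F : I -> pwfun R) :
  Defs.pcomp (pw_eval D nb (\big[@padd R/pzero R]_(i : I) F i) Y) r =
  \sum_(i : I) Defs.pcomp (pw_eval D nb (F i) Y) r.
Proof. exact: (big_morph (fun u => Defs.pcomp (pw_eval D nb u Y) r) (pw_add D nb Y r) (pw_zero D nb Y r)). Qed.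

Lemma bevd_add d (hd : dlin d) b r X (u v : pwfun R) :
  bev (d (vcomp (padd u v b) r)) X = bev (d (vcomp (u b) r)) X + bev (d (vcomp (v b) r)) X.
Proof. by case: hd => h1 _ _; rewrite /padd vcomp_vadd h1 bev_add. Qed.

Lemma bevd_zero d (hd : dlin d) b r X : bev (d (vcomp (pzero R b) r)) X = 0.
Proof.
case: hd => _ _ h3; have -> : vcomp (pzero R b) r = bzero R by rewrite /vcomp; case: ifP.
by rewrite h3 bev_zero.
Qed.

Lemma bevd_scale d (hd : dlin d) b r X a (u : pwfun R) :
  bev (d (vcomp (pscale a u b) r)) X = a * bev (d (vcomp (u b) r)) X.
Proof.
case: hd => _ h2 _; have -> : vcomp (pscale a u b) r = bscale a (vcomp (u b) r).
  by rewrite /pscale /vscale /vcomp; case: ifP.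
by rewrite h2 bev_scale.
Qed.

Lemma bevd_sum d (hd : dlin d) b r X (I : finType) (F : I -> pwfun R) :
  bev (d (vcomp ((\big[@padd R/pzero R]_(i : I) F i) b) r)) X =
  \sum_(i : I) bev (d (vcomp (F i b) r)) X.
Proof.
exact: (big_morph (fun u : pwfun R => bev (d (vcomp (u b) r)) X) (bevd_add hd b r X) (bevd_zero hd b r X)).
Qed.

Lemma Ij_entry (X : pt R) (g : 'cV[R]_4) j r :
  (Ij R j *m g) r 0 = bev (bd j (vcomp (linv X g) r)) X.
Proof.
have [->|->] := I2P j; have [->|->] := I2P r;
  rewrite /Ij /bd /vcomp /= !inordK //= mxE sum4 !row_mx_inord !inordK //= !mxE !inordK //=
     ?inord2E //= /bev /=; ring.
Qed.

Lemma bd2_zero (X : pt R) (g : 'cV[R]_4) j k r :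
  bev (bd j (bd k (vcomp (linv X g) r))) X = 0.
Proof.
have [->|->] := I2P j; have [->|->] := I2P k; have [->|->] := I2P r;
  rewrite /bd /vcomp /= !inordK //= /bev /=; ring.
Qed.

Lemma id_zero (X : pt R) (g : 'cV[R]_4) r : bev (vcomp (linv X g) r) X = 0.
Proof. by rewrite linvE kron1_mul /psub !subrr !mul0r addr0. Qed.

End Main.

Unset Implicit Arguments. Set Strict Implicit.


Theorem mainTheorem15 (R : realFieldType) (e : element R)
  (lam mu : bool -> R) (D E F nb : pt R)
  (phi : 'I_2 -> 'I_(nnodes e) -> pwfun R) :
  valid_element e ->
  (forall s, 0 < lam s) -> (forall s, 0 < mu s) ->
  (* Gamma meets dT at D <> E, l = line DE with unit normal nb *)
  onBdT e D -> onBdT e E -> D <> E ->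
  side D nb E = 0 -> nb.1 ^+ 2 + nb.2 ^+ 2 = 1 ->
  (* l splits T into two parts *)
  (exists Y Z, [/\ inT e Y, inT e Z, 0 < side D nb Y & side D nb Z < 0]) ->
  (* the fixed point F on l *)
  side D nb F = 0 ->
  unisolvent e lam mu D E F nb ->
  is_shape_family e lam mu D E F nb phi ->
  forall (X : pt R) (Xb : 'I_(nnodes e) -> pt R) (s : bool),
    inT e X -> (forall i, side D nb (Xb i) = 0) ->
    [/\ ident_lhs e lam mu D nb X Xb phi id s = 0,
        forall j : 'I_2, ident_lhs e lam mu D nb X Xb phi (bd j) s = Ij R j &
        forall j k : 'I_2,
          ident_lhs e lam mu D nb X Xb phi (fun p => bd j (bd k p)) s = 0].
Proof.
move=> hval hl hm hD hE hDE hsE hn [Yp [Zm [hYp hZm hsY hsZ]]] hF huni hphi X Xb s hX hXb.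
pose U g := Ufun s X D (Mbar lam mu nb s) g.
pose coef g (c : 'I_2) (i : 'I_(nnodes e)) :=
  Defs.pcomp (pw_eval D nb (U g) (@nodes _ e i)) c.
pose V g := \big[@padd R/pzero R]_(i < nnodes e)
              \big[@padd R/pzero R]_(c < 2) pscale (coef g c i) (phi c i).
have hVI : forall g, is_IFE e lam mu D E F nb (V g).
  move=> g; apply: big_ind => [|u v|i _]; [exact: IFE_zero | exact: IFE_add|].
  apply: big_ind => [|u v|c _]; [exact: IFE_zero | exact: IFE_add|].
  apply: IFE_scale; exact: (hphi c i).1.
have hUI : forall g, is_IFE e lam mu D E F nb (U g) by move=> g; exact: U_IFE.
have hVs : forall g, V g s = U g s.
  move=> g; apply: (region s hD hE hDE hsE hn hYp hZm hsY hsZ) => Y hY.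
  apply: (huni _ _ (hVI g) (hUI g)) => // j.
  apply: pt_eq_pcomp => r.
  rewrite /V pw_sum (bigD1 j) //= big1 ?addr0.
  - rewrite pw_sum (bigD1 r) //= big1 ?addr0.
    + by rewrite pw_scale (hphi r j).2 !eqxx mulr1.
    + move=> c hc; rewrite pw_scale (hphi c j).2 eq_sym (negbTE hc) /=; exact: mulr0.
  - move=> i hi; rewrite pw_sum big1 // => c _.
    by rewrite pw_scale (hphi c i).2 (negbTE hi) andbF mulr0.
have hent : forall d, dlin d -> forall g r,
    (ident_lhs e lam mu D nb X Xb phi d s *m g) r 0 = bev (d (vcomp (linv X g) r)) X.
  move=> d hd g r.
  have -> : linv X g = U g s by rewrite /U /Ufun eqxx.
  rewrite -(hVs g) /V bevd_sum // ident_decomp mulmx_suml summxE; apply: eq_bigr => i _.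
  rewrite bevd_sum // -mulmxA mxE; apply: eq_bigr => c _.
  rewrite bevd_scale // /PhiM mxE mulrC; congr (_ * _).
  by rewrite /coef /U (@coefU R D nb X (@nodes _ e i) (Xb i) lam mu s g c hl hm hn (hXb i)).
split.
- by apply: mx_eq_col => g r; rewrite (hent id (@dlin_id R)) mul0mx mxE id_zero.
- by move=> j; apply: mx_eq_col => g r; rewrite (hent _ (@dlin_bd R j)) (Ij_entry X).
- move=> j k; apply: mx_eq_col => g r.
  by rewrite (hent _ (dlin_comp (@dlin_bd R j) (@dlin_bd R k))) mul0mx mxE bd2_zero.
Qed.
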